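(* On each chart of $\mathbb O'P^2$ with coordinates $(u,v)$ (satisfying $1+|u|^2+|v|^2>0$), the symmetric bilinear form whose quadratic form on tangent vectors $(du,dv)=(\xi,\eta)\in\mathbb O'^2$ is $$ds^2=\frac{|\xi|^2(1+|v|^2)+|\eta|^2(1+|u|^2)-2\mathrm{Re}\big[(u\bar v)(\eta\bar\xi)\big]}{(1+|u|^2+|v|^2)^2}$$ is non-degenerate of signature $(8,8)$ at every point.
   Context: Para-octonions $\mathbb O'=\mathbb H\oplus\mathbb H$ with product $(q_1,q_2)(p_1,p_2)=(q_1p_1+\bar p_2q_2,\ p_2q_1+q_2\bar p_1)$, conjugation $\overline{(q_1,q_2)}=(\bar q_1,-q_2)$, $\langle a,b\rangle=\mathrm{Re}(a\bar b)$, $|a|^2=\langle a,a\rangle$ (a form of signature $(4,4)$). $\mathbb O'P^2=\mathcal U/_\sim$ where $\mathcal U=\{(1,y,z):1+|y|^2+|z|^2>0\}\cup\{(x,1,z):|x|^2+1+|z|^2>0\}\cup\{(x,y,1):|x|^2+|y|^2+1>0\}$ and $[a,b,c]\sim[d,e,f]$ iff $(a,b,c)=(d\lambda,e\lambda,f\lambda)$ for some $\lambda$ with $|\lambda|^2>0$; charts $[1,u,v]\mapsto(u,v)$, $[u,1,v]\mapsto(u,v)$, $[u,v,1]\mapsto(u,v)$. *)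

(* Defs.v *)
(* Para-octonions O' = H (+) H over a real closed field R. *)
From HB Require Import structures.
From mathcomp Require Import all_boot all_order all_algebra.
Set Implicit Arguments. Unset Strict Implicit. Unset Printing Implicit Defensive.
Import Order.TTheory GRing.Theory Num.Theory.
Local Open Scope ring_scope.

Section ParaOct.
Variable R : rcfType.

Record quat := Quat { qa : R; qb : R; qc : R; qd : R }.

Definition qadd (p q : quat) :=
  Quat (qa p + qa q) (qb p + qb q) (qc p + qc q) (qd p + qd q).
Definition qopp (p : quat) := Quat (- qa p) (- qb p) (- qc p) (- qd p).
Definition qconj (p : quat) := Quat (qa p) (- qb p) (- qc p) (- qd p).
Definition qmul (p q : quat) :=
  Quat (qa p * qa q - qb p * qb q - qc p * qc q - qd p * qd q)
       (qa p * qb q + qb p * qa q + qc p * qd q - qd p * qc q)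
       (qa p * qc q - qb p * qd q + qc p * qa q + qd p * qb q)
       (qa p * qd q + qb p * qc q - qc p * qb q + qd p * qa q).
Definition qre (p : quat) := qa p.

Record poct := POct { o1 : quat; o2 : quat }.

Definition omul (x y : poct) :=
  POct (qadd (qmul (o1 x) (o1 y)) (qmul (qconj (o2 y)) (o2 x)))
       (qadd (qmul (o2 y) (o1 x)) (qmul (o2 x) (qconj (o1 y)))).
Definition oadd (x y : poct) := POct (qadd (o1 x) (o1 y)) (qadd (o2 x) (o2 y)).
Definition oconj (x : poct) := POct (qconj (o1 x)) (qopp (o2 x)).
Definition ore (x : poct) := qre (o1 x).
Definition oinner (x y : poct) := ore (omul x (oconj y)).
Definition onorm2 (x : poct) := oinner x x.

Definition ds2 (u v xi eta : poct) : R :=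
  (onorm2 xi * (1 + onorm2 v) + onorm2 eta * (1 + onorm2 u)
    - 2 * ore (omul (omul u (oconj v)) (omul eta (oconj xi))))
  / (1 + onorm2 u + onorm2 v) ^+ 2.

(* Real coordinates: a tangent vector (xi,eta) in O'^2 = R^16 *)
Definition cf (x : 'rV[R]_16) (k : nat) : R := x 0 (inord k).
Definition quat_of (x : 'rV[R]_16) (k : nat) : quat :=
  Quat (cf x k) (cf x k.+1) (cf x k.+2) (cf x k.+3).
Definition tan_xi (x : 'rV[R]_16) : poct := POct (quat_of x 0) (quat_of x 4).
Definition tan_eta (x : 'rV[R]_16) : poct := POct (quat_of x 8) (quat_of x 12).

Definition ds2_vec (u v : poct) (x : 'rV[R]_16) : R :=
  ds2 u v (tan_xi x) (tan_eta x).

Definition ds2_bil (u v : poct) (x y : 'rV[R]_16) : R :=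
  (ds2_vec u v (x + y) - ds2_vec u v x - ds2_vec u v y) / 2.

Definition ds2_gram (u v : poct) : 'M[R]_16 :=
  \matrix_(i, j) ds2_bil u v (delta_mx 0 i) (delta_mx 0 j).

End ParaOct.

(* Signature (p,q) of a symmetric matrix G of size p+q with no null part:
   G is congruent to diag(1,...,1,-1,...,-1) (p ones, q minus ones)
   (Sylvester normal form). *)
Definition sylv_diag (R : rcfType) (p q : nat) : 'M[R]_(p + q) :=
  diag_mx (\row_(i < p + q) (if (i < p)%N then 1 else -1)).

Definition nondeg_signature (R : rcfType) (p q : nat) (G : 'M[R]_(p + q)) : Prop :=
  G^T = G /\ \det G != 0 /\
  exists2 P : 'M[R]_(p + q), P \in unitmx & P^T *m G *m P = sylv_diag R p q.
Arguments nondeg_signature {R} p q G.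

(* Main.v *)
Require Import Defs.
From mathcomp Require Import all_boot all_order all_algebra.
From mathcomp Require Import ring lra zify.
Import Order.TTheory GRing.Theory Num.Theory.
Local Open Scope ring_scope.

Section Work.
Variable R : rcfType.

Definition oscale (k : R) (x : poct R) :=
  POct (Quat (k * qa (o1 x)) (k * qb (o1 x)) (k * qc (o1 x)) (k * qd (o1 x)))
       (Quat (k * qa (o2 x)) (k * qb (o2 x)) (k * qc (o2 x)) (k * qd (o2 x))).
Definition o0 : poct R := POct (Quat 0 0 0 0) (Quat 0 0 0 0).

Ltac octunf := cbv beta iota delta [oinner onorm2 omul oconj ore qre qadd qmul qconj qopp o1 o2 qa qb qc qd oadd oscale o0].
Ltac d1 x := move: x => [[? ? ? ?] [? ? ? ?]].
Ltac brute := octunf; ring.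

Lemma innerC (x y : poct R) : oinner x y = oinner y x.
Proof. d1 x; d1 y; brute. Qed.
Lemma innerDl (x y z : poct R) : oinner (oadd x y) z = oinner x z + oinner y z.
Proof. d1 x; d1 y; d1 z; brute. Qed.
Lemma innerDr (x y z : poct R) : oinner z (oadd x y) = oinner z x + oinner z y.
Proof. d1 x; d1 y; d1 z; brute. Qed.
Lemma innerZl k (x y : poct R) : oinner (oscale k x) y = k * oinner x y.
Proof. d1 x; d1 y; brute. Qed.
Lemma innerZr k (x y : poct R) : oinner x (oscale k y) = k * oinner x y.
Proof. d1 x; d1 y; brute. Qed.
Lemma inner0l (y : poct R) : oinner o0 y = 0.
Proof. d1 y; brute. Qed.
Lemma inner0r (y : poct R) : oinner y o0 = 0.
Proof. d1 y; brute. Qed.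
Lemma mulDr_inner (a y1 y2 z : poct R) :
  oinner (omul a (oadd y1 y2)) z = oinner (omul a y1) z + oinner (omul a y2) z.
Proof. d1 a; d1 y1; d1 y2; d1 z; brute. Qed.
Lemma mulZr_inner (a : poct R) k (y z : poct R) :
  oinner (omul a (oscale k y)) z = k * oinner (omul a y) z.
Proof. d1 a; d1 y; d1 z; brute. Qed.
Lemma mul0r_inner (a z : poct R) : oinner (omul a o0) z = 0.
Proof. d1 a; d1 z; brute. Qed.
Lemma n2_add (x y : poct R) : onorm2 (oadd x y) = onorm2 x + onorm2 y + 2 * oinner x y.
Proof. d1 x; d1 y; brute. Qed.
Lemma n2_conj (x : poct R) : onorm2 (oconj x) = onorm2 x.
Proof. d1 x; brute. Qed.
Lemma ore_assoc (a y w : poct R) : ore (omul a (omul y (oconj w))) = oinner (omul a y) w.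
Proof. d1 a; d1 y; d1 w; brute. Qed.
Lemma compo (a y z : poct R) : oinner (omul a y) (omul a z) = onorm2 a * oinner y z.
Proof. d1 a; d1 y; d1 z; brute. Qed.
Lemma adjoint (a y z : poct R) : oinner (omul a y) z = oinner y (omul (oconj a) z).
Proof. d1 a; d1 y; d1 z; brute. Qed.
Lemma n2_mul (x y : poct R) : onorm2 (omul x y) = onorm2 x * onorm2 y.
Proof. exact: compo. Qed.

Variables u v : poct R.
Definition cc := 1 + onorm2 v.
Definition cc' := 1 + onorm2 u.
Definition DD := 1 + onorm2 u + onorm2 v.
Definition aa := omul u (oconj v).

Definition Bn (x1 y1 x2 y2 : poct R) :=
  cc * oinner x1 x2 + cc' * oinner y1 y2 - oinner (omul aa y1) x2 - oinner (omul aa y2) x1.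

Lemma BnC x1 y1 x2 y2 : Bn x1 y1 x2 y2 = Bn x2 y2 x1 y1.
Proof. rewrite /Bn (innerC x1) (innerC y1); ring. Qed.

Lemma polar x1 y1 x2 y2 :
  ds2 u v (oadd x1 x2) (oadd y1 y2) - ds2 u v x1 y1 - ds2 u v x2 y2 = 2 * Bn x1 y1 x2 y2 / DD ^+ 2.
Proof.
rewrite /ds2 !ore_assoc !n2_add !mulDr_inner !innerDr /Bn /cc /cc' /DD /aa.
set W := (1 + _ + _) ^+ 2.
rewrite -!mulrBl; congr (_ * _).
ring.
Qed.

Lemma tan_xiD (x y : 'rV[R]_16) : tan_xi (x + y) = oadd (tan_xi x) (tan_xi y).
Proof. by rewrite /tan_xi /oadd /quat_of /qadd /cf !mxE. Qed.
Lemma tan_etaD (x y : 'rV[R]_16) : tan_eta (x + y) = oadd (tan_eta x) (tan_eta y).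
Proof. by rewrite /tan_eta /oadd /quat_of /qadd /cf !mxE. Qed.
Lemma tan_xiZ k (x : 'rV[R]_16) : tan_xi (k *: x) = oscale k (tan_xi x).
Proof. by rewrite /tan_xi /oscale /quat_of /cf !mxE. Qed.
Lemma tan_etaZ k (x : 'rV[R]_16) : tan_eta (k *: x) = oscale k (tan_eta x).
Proof. by rewrite /tan_eta /oscale /quat_of /cf !mxE. Qed.

Definition bn (x y : 'rV[R]_16) := Bn (tan_xi x) (tan_eta x) (tan_xi y) (tan_eta y).

Lemma bil_bn x y : ds2_bil u v x y = bn x y / DD ^+ 2.
Proof.
rewrite /ds2_bil /ds2_vec tan_xiD tan_etaD polar /bn.
set B := Bn _ _ _ _; set W := DD ^+ 2.
rewrite mulrAC [2 * B]mulrC mulfK //.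
by rewrite pnatr_eq0.
Qed.

Lemma bnC x y : bn x y = bn y x.
Proof. exact: BnC. Qed.
Lemma bnD x1 x2 y : bn (x1 + x2) y = bn x1 y + bn x2 y.
Proof.
rewrite /bn tan_xiD tan_etaD /Bn !innerDl !innerDr !mulDr_inner; ring.
Qed.
Lemma bnZ k x y : bn (k *: x) y = k * bn x y.
Proof.
rewrite /bn tan_xiZ tan_etaZ /Bn !innerZl !innerZr !mulZr_inner; ring.
Qed.
Lemma bn0 y : bn 0 y = 0.
Proof. by rewrite -(scale0r 0) bnZ mul0r. Qed.

Lemma bn_suml (F : 'I_16 -> 'rV[R]_16) y :
  bn (\sum_(k < 16) F k) y = \sum_(k < 16) bn (F k) y.
Proof.
elim/big_rec2: _ => [|k s1 s2 _ <-]; first by rewrite bn0.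
by rewrite bnD.
Qed.

Lemma bn_expand x y : bn x y =
  \sum_(k < 16) \sum_(l < 16) x 0 k * y 0 l * bn (delta_mx 0 k) (delta_mx 0 l).
Proof.
rewrite {1}(row_sum_delta x) bn_suml; apply: eq_bigr => k _.
rewrite bnZ bnC {1}(row_sum_delta y) bn_suml mulr_sumr; apply: eq_bigr => l _.
by rewrite bnZ bnC; ring.
Qed.

Lemma gram_form (P : 'M[R]_16) i j :
  (P^T *m ds2_gram u v *m P) i j = bn (\row_k P k i) (\row_k P k j) / DD ^+ 2.
Proof.
rewrite bn_expand mxE mulr_suml.
under eq_bigr => l _ do rewrite mxE mulr_suml.
rewrite exchange_big /=; apply: eq_bigr => k _.
rewrite mulr_suml; apply: eq_bigr => l _.
rewrite !mxE bil_bn; ring.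
Qed.


Definition coordn (p : poct R * poct R) (k : nat) : R :=
  match k with
  | 0 => qa (o1 p.1) | 1 => qb (o1 p.1) | 2 => qc (o1 p.1) | 3 => qd (o1 p.1)
  | 4 => qa (o2 p.1) | 5 => qb (o2 p.1) | 6 => qc (o2 p.1) | 7 => qd (o2 p.1)
  | 8 => qa (o1 p.2) | 9 => qb (o1 p.2) | 10 => qc (o1 p.2) | 11 => qd (o1 p.2)
  | 12 => qa (o2 p.2) | 13 => qb (o2 p.2) | 14 => qc (o2 p.2) | 15 => qd (o2 p.2)
  | _ => 0 end.
Definition vec_of (p : poct R * poct R) : 'rV[R]_16 := \row_(k < 16) coordn p k.

Lemma tan_xi_vec p : tan_xi (vec_of p) = p.1.
Proof.
case: p => [[[? ? ? ?] [? ? ? ?]] [[? ? ? ?] [? ? ? ?]]].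
by rewrite /tan_xi /quat_of /cf !mxE !inordK.
Qed.
Lemma tan_eta_vec p : tan_eta (vec_of p) = p.2.
Proof.
case: p => [[[? ? ? ?] [? ? ? ?]] [[? ? ? ?] [? ? ? ?]]].
by rewrite /tan_eta /quat_of /cf !mxE !inordK.
Qed.

Definition eb (k : nat) : poct R :=
  POct (Quat (k == 0)%N%:R (k == 1)%N%:R (k == 2)%N%:R (k == 3)%N%:R)
       (Quat (k == 4)%N%:R (k == 5)%N%:R (k == 6)%N%:R (k == 7)%N%:R).
Definition sig (k : nat) : R := if (k < 4)%N then 1 else -1.

Lemma eb_inner k l : (k < 8)%N -> (l < 8)%N ->
  oinner (eb k) (eb l) = if k == l then sig k else 0.
Proof.
case: k => [|[|[|[|[|[|[|[|k]]]]]]]] // _; case: l => [|[|[|[|[|[|[|[|l]]]]]]]] // _;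
  rewrite /eb /sig /=; octunf; ring.
Qed.

Definition typ (i : nat) := (i %% 8 < 4)%N.
Definition kk (b : bool) (i : nat) := (i %% 4 + 4 * (b == (8 <= i)))%N.

Lemma comb1n b i j : (i < 16)%N -> (j < 16)%N ->
  ((typ i == typ j) && (kk b i == kk b j)) = (i == j).
Proof.
rewrite /typ /kk => hi hj; case: b.
all: apply/idP/idP; [case/andP=> /eqP h1 /eqP h2; apply/eqP | move/eqP => ->; by rewrite !eqxx].
all: case: (ltnP i 8) h2 => h3; case: (ltnP j 8) => h4 /=; rewrite ?eqxx /= => h2.
all: case: (ltnP (i %% 8) 4) h1 => h5; case: (ltnP (j %% 8) 4) => h6 //= _; lia.
Qed.
Lemma comb2n b i : (i < 16)%N -> (b == (kk b i < 4)%N) = (i < 8)%N.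
Proof.
rewrite /kk => hi; case: b; case: (ltnP i 8) => h /=; rewrite ?eqxx /=; lia.
Qed.
Lemma kkn b i : (i < 16)%N -> (kk b i < 8)%N.
Proof. rewrite /kk => hi; case: b; case: (ltnP i 8) => h /=; rewrite ?eqxx /=; lia. Qed.

Lemma comb1 b (i j : 'I_16) : ((typ i == typ j) && (kk b i == kk b j)) = (i == j).
Proof. by rewrite comb1n. Qed.
Lemma comb2 b (i : 'I_16) : (b == (kk b i < 4)%N) = (i < 8)%N.
Proof. by rewrite comb2n. Qed.
Lemma kk_lt8 b (i : 'I_16) : (kk b i < 8)%N.
Proof. by rewrite kkn. Qed.

Definition Bnp (p q : poct R * poct R) := Bn p.1 p.2 q.1 q.2.
Definition sgn (b : bool) : R := if b then 1 else -1.
Definition pv b (F1 F2 : nat -> poct R * poct R) (i : 'I_16) : 'rV[R]_16 :=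
  vec_of (if typ i then F1 (kk b i) else F2 (kk b i)).

Lemma sgn_sig (b t : bool) : sgn b * (if t then 1 else -1) = if b == t then 1 else -1.
Proof. by case: b; case: t; rewrite /sgn /= ?mul1r ?mulr1 ?mulN1r ?opprK. Qed.

Lemma frame_ok b F1 F2 :
 DD != 0 ->
 (forall k l, (k < 8)%N -> (l < 8)%N -> Bnp (F1 k) (F1 l) = sgn b * DD^+2 * oinner (eb k) (eb l)) ->
 (forall k l, (k < 8)%N -> (l < 8)%N -> Bnp (F2 k) (F2 l) = sgn b * DD^+2 * oinner (eb k) (eb l)) ->
 (forall k l, (k < 8)%N -> (l < 8)%N -> Bnp (F1 k) (F2 l) = 0) ->
 forall i j : 'I_16, bn (pv b F1 F2 i) (pv b F1 F2 j) / DD^+2 = sylv_diag R 8 8 i j.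
Proof.
move=> hD H11 H22 H12 i j.
have hB p q : bn (vec_of p) (vec_of q) = Bnp p q by rewrite /bn !tan_xi_vec !tan_eta_vec.
have hW : DD ^+ 2 != 0 by rewrite expf_neq0.
have E X : sgn b * DD ^+ 2 * X / DD ^+ 2 = sgn b * X by rewrite mulrAC mulfK.
have Hk := kk_lt8 b i; have Hl := kk_lt8 b j.
rewrite /pv hB /sylv_diag !mxE -(comb1 b i j).
case Ti: (typ i); case Tj: (typ j) => /=.
- rewrite H11 // E eb_inner //; case: eqP => [_|_]; last by rewrite mulr0 mulr0n.
  rewrite mulr1n /sig -(comb2 b i); move: (kk b i < 4)%N => t.
  exact: sgn_sig.
- by rewrite H12 // mul0r mulr0n.
- have -> : Bnp (F2 (kk b i)) (F1 (kk b j)) = 0 by rewrite /Bnp BnC; exact: H12.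
  by rewrite mul0r mulr0n.
- rewrite H22 // E eb_inner //; case: eqP => [_|_]; last by rewrite mulr0 mulr0n.
  rewrite mulr1n /sig -(comb2 b i); move: (kk b i < 4)%N => t.
  exact: sgn_sig.
Qed.


Lemma frame_P b F1 F2 :
  (forall i j : 'I_16, bn (pv b F1 F2 i) (pv b F1 F2 j) / DD^+2 = sylv_diag R 8 8 i j) ->
  exists P : 'M[R]_16, P^T *m ds2_gram u v *m P = sylv_diag R 8 8.
Proof.
move=> H; exists (\matrix_(k, i) (pv b F1 F2 i) 0 k); apply/matrixP => i j.
rewrite gram_form -H; congr (bn _ _ / _); apply/rowP => k; by rewrite !mxE.
Qed.

Lemma sgn_c (c : R) : c != 0 -> c / `|c| = sgn (0 < c) /\ `|c| / c = sgn (0 < c).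
Proof.
move=> hc; case: (ltrgtP 0 c) => h.
- by rewrite ger0_norm ?ltW // divff // /sgn h.
- rewrite ltr0_norm // invrN mulrN mulNr divff // /sgn (lt_gtF h); split => //.
- by move: hc; rewrite -h eqxx.
Qed.

Lemma sq_ne0 (c : R) : c != 0 -> Num.sqrt `|c| != 0.
Proof. by move=> hc; rewrite sqrtr_eq0 -ltNge normr_gt0. Qed.

Lemma case1 : 0 < DD -> cc != 0 ->
  let b := (0 < cc) in
  let lam := DD / Num.sqrt `|cc| in
  let mu := Num.sqrt (DD * `|cc|) in
  forall i j : 'I_16,
  bn (pv b (fun k => (oscale lam (eb k), o0))
           (fun k => (oscale (mu / cc) (omul aa (eb k)), oscale mu (eb k))) i)
     (pv b (fun k => (oscale lam (eb k), o0))
           (fun k => (oscale (mu / cc) (omul aa (eb k)), oscale mu (eb k))) j)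
   / DD ^+ 2 = sylv_diag R 8 8 i j.
Proof.
move=> hD hc b lam mu.
have hs : Num.sqrt `|cc| ^+ 2 = `|cc| by rewrite sqr_sqrtr.
have hs0 := sq_ne0 _ hc.
have hm : mu ^+ 2 = DD * `|cc| by rewrite /mu sqr_sqrtr // mulr_ge0 // ltW.
apply: frame_ok; first by rewrite gt_eqF.
- move=> k l _ _; rewrite /Bnp /Bn /= innerZl innerZr inner0l !mul0r_inner.
  rewrite -(sgn_c _ hc).1 -hs /lam; field; exact: hs0.
- move=> k l _ _; rewrite /Bnp /Bn /= !innerZl !innerZr !mulZr_inner ?innerZr !compo.
  rewrite (innerC (eb l)) /aa n2_mul n2_conj.
  rewrite -(sgn_c _ hc).2.
  transitivity (mu ^+ 2 * DD / cc * oinner (eb k) (eb l)).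
    by move: hc; rewrite /DD /cc /cc' => hc; field.
  by rewrite hm; field.
- move=> k l _ _; rewrite /Bnp /Bn /= !innerZl !innerZr inner0l mul0r_inner mulZr_inner ?innerZr.
  rewrite (innerC (eb k)); field; exact: hc.
Qed.


Lemma case2 : 0 < DD -> cc' != 0 ->
  let b := (0 < cc') in
  let lam := DD / Num.sqrt `|cc'| in
  let mu := Num.sqrt (DD * `|cc'|) in
  forall i j : 'I_16,
  bn (pv b (fun k => (o0, oscale lam (eb k)))
           (fun k => (oscale mu (eb k), oscale (mu / cc') (omul (oconj aa) (eb k)))) i)
     (pv b (fun k => (o0, oscale lam (eb k)))
           (fun k => (oscale mu (eb k), oscale (mu / cc') (omul (oconj aa) (eb k)))) j)
   / DD ^+ 2 = sylv_diag R 8 8 i j.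
Proof.
move=> hD hc b lam mu.
have hs : Num.sqrt `|cc'| ^+ 2 = `|cc'| by rewrite sqr_sqrtr.
have hs0 := sq_ne0 _ hc.
have hm : mu ^+ 2 = DD * `|cc'| by rewrite /mu sqr_sqrtr // mulr_ge0 // ltW.
apply: frame_ok; first by rewrite gt_eqF.
- move=> k l _ _; rewrite /Bnp /Bn /= inner0l !inner0r innerZl innerZr.
  rewrite -(sgn_c _ hc).1 -hs /lam; field; exact: hs0.
- move=> k l _ _; rewrite /Bnp /Bn /= !innerZl !innerZr !mulZr_inner ?innerZr !compo.
  rewrite !(adjoint aa) !compo (innerC (eb l)) n2_conj /aa n2_mul n2_conj.
  rewrite -(sgn_c _ hc).2.
  transitivity (mu ^+ 2 * DD / cc' * oinner (eb k) (eb l)).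
    by move: hc; rewrite /DD /cc /cc' => hc; field.
  by rewrite hm; field.
- move=> k l _ _; rewrite /Bnp /Bn /= inner0l !inner0r !innerZl !innerZr !mulZr_inner ?innerZr.
  rewrite adjoint; field; exact: hc.
Qed.

End Work.

Theorem proposition6p5 (R : rcfType) (u v : poct R) :
  0 < 1 + onorm2 u + onorm2 v ->
  nondeg_signature 8 8 (ds2_gram u v).
Proof.
move=> hD; rewrite -/(DD R u v) in hD.
have HP : exists P : 'M[R]_16, P^T *m ds2_gram u v *m P = sylv_diag R 8 8.
  have : (cc R v != 0) || (cc' R u != 0).
    case: eqP => h1 //=; case: eqP => h2 //=.
    move: hD; have -> : DD R u v = cc R v + cc' R u - 1 by rewrite /DD /cc /cc'; ring.
    by rewrite h1 h2 add0r sub0r oppr_gt0 ltr10.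
  case/orP => hc.
  - apply: frame_P; exact: (@case1 R u v hD hc).
  - apply: frame_P; exact: (@case2 R u v hD hc).
case: HP => P HP.
have hS : \det (sylv_diag R 8 8) != 0.
  rewrite /sylv_diag det_diag; apply/prodf_neq0 => i _; rewrite mxE.
  by case: ifP => _; rewrite ?oppr_eq0 oner_eq0.
have hdet := congr1 determinant HP; rewrite !det_mulmx det_tr in hdet.
split; first by apply/matrixP => i j; rewrite !mxE !bil_bn bnC.
split.
  apply/negP => /eqP h0; move: hS; by rewrite -hdet h0 mulr0 mul0r eqxx.
exists P => //.
rewrite unitmxE unitfE; apply/negP => /eqP h0; move: hS; by rewrite -hdet h0 mul0r mul0r eqxx.
Qed.
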